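(* Let $\nu>0$, $\tau>0$, $A>0$, $N\ge2$, and let $h^n$ ($n\ge0$) be generated by the MBE scheme $h^0=\Pi_Nh_0$, $\frac{h^{n+1}-h^n}{\tau}=-\nu\Delta^2h^{n+1}+A\Delta(h^{n+1}-h^n)+\Pi_N\nabla\cdot(g(\nabla h^n))$ with $h_0$ of mean zero. Then for every $n\ge0$, with $E_n=E(h^n)$, $$E_{n+1}-E_n+\Big(A+\frac12+\sqrt{\frac{2\nu}\tau}\Big)\|\nabla(h^{n+1}-h^n)\|_2^2\le\|\nabla(h^{n+1}-h^n)\|_2^2\cdot\frac32\max\{\|\nabla h^n\|_\infty^2,\|\nabla h^{n+1}\|_\infty^2\}.$$
   Context: $\mathbb T^2=\mathbb R^2/2\pi\mathbb Z^2$; $g(z)=(|z|^2-1)z$, $G(z)=\frac14(|z|^2-1)^2$; $E(h)=\frac\nu2\|\Delta h\|_2^2+\int_{\mathbb T^2}G(\nabla h)dx$; $\Pi_N$ is the $L^2$-orthogonal projection onto $X_N=\operatorname{span}\{\cos(k\cdot x),\sin(k\cdot x):|k|\le N\}$. *)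

(* Defs.v *)
From Stdlib Require Import Reals Lra ZArith List ClassicalEpsilon.
Open Scope R_scope.

(* Functions on T^2 = R^2 / 2piZ^2 are represented as 2pi-periodic maps R -> R -> R. *)
Definition fn2 := R -> R -> R.

Definition periodic2 (f : fn2) : Prop :=
  forall x y, f (x + 2 * PI) y = f x y /\ f x (y + 2 * PI) = f x y.

Definition cont2 (f : fn2) : Prop :=
  forall x y eps, 0 < eps -> exists d, 0 < d /\
    forall x' y', Rabs (x' - x) < d -> Rabs (y' - y) < d ->
      Rabs (f x' y' - f x y) < eps.

(* One-dimensional Riemann integral (Stdlib), independent of the proof term. *)
Definition Int1 (f : R -> R) (a b : R) : R :=
  epsilon (inhabits 0) (fun l => exists pr : Riemann_integrable f a b, RiemannInt pr = l).

Definition Int2 (f : fn2) : R :=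
  Int1 (fun x => Int1 (fun y => f x y) 0 (2 * PI)) 0 (2 * PI).

Definition pd1 (f : fn2) : fn2 := fun x y =>
  epsilon (inhabits 0) (fun l => derivable_pt_lim (fun t => f t y) x l).
Definition pd2 (f : fn2) : fn2 := fun x y =>
  epsilon (inhabits 0) (fun l => derivable_pt_lim (fun t => f x t) y l).

Definition lap (f : fn2) : fn2 := fun x y => pd1 (pd1 f) x y + pd2 (pd2 f) x y.

Definition sub2 (f g : fn2) : fn2 := fun x y => f x y - g x y.

Definition gradsq (f : fn2) : fn2 := fun x y => (pd1 f x y)^2 + (pd2 f x y)^2.

(* g(z) = (|z|^2-1) z,  G(z) = 1/4 (|z|^2-1)^2 *)
Definition G_of_grad (f : fn2) : fn2 := fun x y => / 4 * (gradsq f x y - 1)^2.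

Definition div_g_grad (f : fn2) : fn2 := fun x y =>
  pd1 (fun a b => (gradsq f a b - 1) * pd1 f a b) x y
  + pd2 (fun a b => (gradsq f a b - 1) * pd2 f a b) x y.

Definition energy (nu : R) (h : fn2) : R :=
  nu / 2 * Int2 (fun x y => (lap h x y)^2) + Int2 (G_of_grad h).

Definition grad_L2sq (f : fn2) : R := Int2 (gradsq f).

Definition grad_Linf (f : fn2) : R :=
  epsilon (inhabits 0)
    (fun M => is_lub (fun r => exists x y, r = sqrt (gradsq f x y)) M).

(* X_N = span{cos(k.x), sin(k.x) : k in Z^2, |k| <= N} *)
Definition trig_term (t : Z * Z * R * R) : fn2 := fun x y =>
  let '(k1, k2, a, b) := t in
  a * cos (IZR k1 * x + IZR k2 * y) + b * sin (IZR k1 * x + IZR k2 * y).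

Definition in_XN (N : nat) (h : fn2) : Prop :=
  exists l : list (Z * Z * R * R),
    Forall (fun t => let '(k1, k2, _, _) := t in
              (k1 * k1 + k2 * k2 <= Z.of_nat N * Z.of_nat N)%Z) l /\
    forall x y, h x y = fold_right (fun t acc => trig_term t x y + acc) 0 l.

Definition PiN (N : nat) (f : fn2) : fn2 :=
  epsilon (inhabits (fun _ _ => 0))
    (fun p => in_XN N p /\
       forall q, in_XN N q -> Int2 (fun x y => (f x y - p x y) * q x y) = 0).

(* Main.v *)
Require Import Defs.
From Stdlib Require Import Reals Lra Lia ZArith List ClassicalEpsilon FunctionalExtensionality.
From Coquelicot Require Import Coquelicot.
Open Scope R_scope.

Definition sem (l : list (Z*Z*R*R)) : fn2 := fun x y =>
  fold_right (fun t acc => trig_term t x y + acc) 0 l.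

Lemma Int1_is_RInt f a b v : is_RInt f a b v -> Int1 f a b = v.
Proof.
  intro H. unfold Int1.
  assert (Hr : Riemann_integrable f a b) by (apply ex_RInt_Reals_0; eexists; eauto).
  assert (Hv : RiemannInt Hr = v).
  { rewrite <- RInt_Reals. now apply is_RInt_unique. }
  destruct (epsilon_spec (inhabits 0) (fun l => exists pr : Riemann_integrable f a b, RiemannInt pr = l)) as [pr Hpr].
  { exists v, Hr; exact Hv. }
  rewrite <- Hpr. rewrite <- Hv. apply RiemannInt_P5.
Qed.

Lemma cos_Zper x k : cos (x + IZR k * (2*PI)) = cos x.
Proof.
  destruct k as [|p|p]; simpl.
  - f_equal; lra.
  - rewrite <- positive_nat_Z, <- INR_IZR_INZ.
    replace (INR (Pos.to_nat p) * (2*PI)) with (2 * INR (Pos.to_nat p) * PI) by ring.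
    apply cos_period.
  - rewrite <- (cos_period (x + IZR (Z.neg p) * (2 * PI)) (Pos.to_nat p)).
    f_equal. rewrite INR_IZR_INZ, positive_nat_Z.
    replace (IZR (Z.neg p)) with (- IZR (Z.pos p)) by (rewrite <- opp_IZR; reflexivity). ring.
Qed.

Lemma sin_Zper x k : sin (x + IZR k * (2*PI)) = sin x.
Proof.
  destruct k as [|p|p]; simpl.
  - f_equal; lra.
  - rewrite <- positive_nat_Z, <- INR_IZR_INZ.
    replace (INR (Pos.to_nat p) * (2*PI)) with (2 * INR (Pos.to_nat p) * PI) by ring.
    apply sin_period.
  - rewrite <- (sin_period (x + IZR (Z.neg p) * (2 * PI)) (Pos.to_nat p)).
    f_equal. rewrite INR_IZR_INZ, positive_nat_Z.
    replace (IZR (Z.neg p)) with (- IZR (Z.pos p)) by (rewrite <- opp_IZR; reflexivity). ring.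
Qed.

Definition val1 (k : Z) a b c : R :=
  if Z.eq_dec k 0 then 2*PI*(a * cos c + b * sin c) else 0.

Lemma is_RInt_term1 k a b c :
  is_RInt (fun t => a * cos (IZR k * t + c) + b * sin (IZR k * t + c)) 0 (2*PI) (val1 k a b c).
Proof.
  unfold val1. destruct (Z.eq_dec k 0) as [->|Hk].
  - apply is_RInt_ext with (fun _ => a * cos c + b * sin c).
    { intros; simpl; repeat f_equal; ring. }
    replace (2 * PI * (a * cos c + b * sin c)) with (scal (2*PI - 0) (a * cos c + b * sin c)).
    2:{ unfold scal; simpl; unfold mult; simpl; ring. }
    exact (@is_RInt_const R_CompleteNormedModule 0 (2*PI) (a * cos c + b * sin c)).
  - assert (Hk' : IZR k <> 0) by (apply not_0_IZR; exact Hk).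
    set (F := fun t => (a * sin (IZR k * t + c) - b * cos (IZR k * t + c)) / IZR k).
    assert (H : is_RInt (fun t => a * cos (IZR k * t + c) + b * sin (IZR k * t + c)) 0 (2*PI) (minus (F (2*PI)) (F 0))).
    { apply (is_RInt_derive (V:=R_CompleteNormedModule)).
      * intros t _. unfold F. auto_derive; auto. field; auto.
      * intros t _. apply (ex_derive_continuous (K:=R_AbsRing) (V:=R_NormedModule)). auto_derive; auto. }
    replace (minus (F (2*PI)) (F 0)) with 0 in H; [exact H|].
    unfold F, minus, plus, opp; simpl.
    replace (IZR k * (2*PI) + c) with (c + IZR k * (2*PI)) by ring.
    rewrite cos_Zper, sin_Zper. replace (IZR k * 0 + c) with c by ring. field; auto.
Qed.

Lemma isR_plus (f g : R -> R) a b (u v : R) : is_RInt f a b u -> is_RInt g a b v ->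
  is_RInt (fun t => f t + g t) a b (u + v).
Proof. intros; apply (is_RInt_plus (V:=R_NormedModule)); auto. Qed.

Lemma isR_scal (f : R -> R) a b k (u : R) : is_RInt f a b u -> is_RInt (fun t => k * f t) a b (k * u).
Proof. intros; apply (is_RInt_scal (V:=R_NormedModule)); auto. Qed.

Lemma isR_eq (f : R -> R) a b (u v : R) : is_RInt f a b u -> u = v -> is_RInt f a b v.
Proof. intros H ->; exact H. Qed.

Lemma isR_const a b c : is_RInt (fun _ => c) a b ((b-a)*c).
Proof. exact (@is_RInt_const R_CompleteNormedModule a b c). Qed.

Lemma isR_zero a b : is_RInt (fun _ => 0) a b 0.
Proof. eapply isR_eq; [apply isR_const|ring]. Qed.

Definition c0t (t : Z*Z*R*R) : R := let '(k1,k2,a,b) := t in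
  if Z.eq_dec k1 0 then if Z.eq_dec k2 0 then a else 0 else 0.
Definition c0 (l : list (Z*Z*R*R)) : R := fold_right (fun t acc => c0t t + acc) 0 l.

Definition inner_t (t : Z*Z*R*R) (x : R) : R := let '(k1,k2,a,b) := t in val1 k2 a b (IZR k1 * x).
Definition inner (l : list (Z*Z*R*R)) x := fold_right (fun t acc => inner_t t x + acc) 0 l.

Lemma inner_is l x : is_RInt (fun y => sem l x y) 0 (2*PI) (inner l x).
Proof.
  induction l as [|t l IH]; simpl.
  - apply isR_zero.
  - apply isR_plus; auto.
    destruct t as [[[k1 k2] a] b]. simpl.
    eapply is_RInt_ext; [|apply (is_RInt_term1 k2 a b (IZR k1 * x))].
    intros y _; simpl. replace (IZR k1 * x + IZR k2 * y) with (IZR k2 * y + IZR k1 * x) by ring; reflexivity.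
Qed.

Lemma outer_is l : is_RInt (inner l) 0 (2*PI) (2*PI*(2*PI*c0 l)).
Proof.
  induction l as [|t l IH]; simpl.
  - replace (2*PI*(2*PI*0)) with 0 by ring. apply isR_zero.
  - replace (2 * PI * (2 * PI * (c0t t + c0 l))) with (2*PI*(2*PI*c0t t) + 2*PI*(2*PI*c0 l)) by ring.
    apply isR_plus; auto.
    destruct t as [[[k1 k2] a] b]. unfold inner_t, c0t, val1.
    destruct (Z.eq_dec k2 0).
    + eapply isR_eq.
      { eapply is_RInt_ext.
        2:{ apply isR_scal. apply (is_RInt_term1 k1 a b 0). }
        intros y _; simpl. rewrite Rplus_0_r. reflexivity. }
      unfold val1; destruct (Z.eq_dec k1 0); rewrite ?cos_0, ?sin_0; ring.
    + eapply isR_eq; [apply isR_zero|]. destruct (Z.eq_dec k1 0); ring.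
Qed.

Lemma Int2_sem l : Int2 (sem l) = 2*PI*(2*PI*c0 l).
Proof.
  unfold Int2.
  replace (fun x => Int1 (fun y => sem l x y) 0 (2*PI)) with (inner l).
  - apply Int1_is_RInt, outer_is.
  - apply functional_extensionality; intro x. symmetry. apply Int1_is_RInt, inner_is.
Qed.

Lemma PI2_pos : 0 <= 2*PI.
Proof. pose proof PI_RGT_0; lra. Qed.

Lemma Int2_sem_nonneg l : (forall x y, 0 <= sem l x y) -> 0 <= 2*PI*(2*PI*c0 l).
Proof.
  intro H. apply (is_RInt_ge_0 (inner l) 0 (2*PI)); [apply PI2_pos|apply outer_is|].
  intros x _. apply (is_RInt_ge_0 (fun y => sem l x y) 0 (2*PI)); [apply PI2_pos|apply inner_is|].
  intros; apply H.
Qed.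

Definition term := (Z*Z*R*R)%type.
Definition scl (c : R) (t : term) : term := let '(k1,k2,a,b) := t in (k1,k2,c*a,c*b).
Definition d1t (t : term) : term := let '(k1,k2,a,b) := t in (k1,k2,IZR k1 * b, -(IZR k1 * a)).
Definition d2t (t : term) : term := let '(k1,k2,a,b) := t in (k1,k2,IZR k2 * b, -(IZR k2 * a)).
Definition mult (t s : term) : list term :=
  let '(k1,k2,a,b) := t in let '(m1,m2,c,d) := s in
  ((k1+m1)%Z, (k2+m2)%Z, (a*c-b*d)/2, (a*d+b*c)/2) :: ((k1-m1)%Z, (k2-m2)%Z, (a*c+b*d)/2, (b*c-a*d)/2) :: nil.
Definition mul (l1 l2 : list term) : list term := flat_map (fun t => flat_map (mult t) l2) l1.

Lemma sem_nil x y : sem nil x y = 0.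
Proof. reflexivity. Qed.
Lemma sem_cons t l x y : sem (t :: l) x y = trig_term t x y + sem l x y.
Proof. reflexivity. Qed.

Lemma sem_app l1 l2 x y : sem (l1 ++ l2) x y = sem l1 x y + sem l2 x y.
Proof. induction l1; simpl. ring. unfold sem in *; simpl. rewrite IHl1. ring. Qed.

Lemma sem_scl c l x y : sem (map (scl c) l) x y = c * sem l x y.
Proof.
  induction l as [|t l IH]; [simpl; unfold sem; simpl; ring|].
  simpl map. rewrite !sem_cons, IH. destruct t as [[[k1 k2] a] b]; simpl. ring.
Qed.

Lemma sem_mult t s x y : sem (mult t s) x y = trig_term t x y * trig_term s x y.
Proof.
  destruct t as [[[k1 k2] a] b]; destruct s as [[[m1 m2] c] d]. unfold mult.
  rewrite !sem_cons, sem_nil. simpl.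
  rewrite !plus_IZR, !minus_IZR.
  set (u := IZR k1 * x + IZR k2 * y). set (v := IZR m1 * x + IZR m2 * y).
  replace ((IZR k1 + IZR m1) * x + (IZR k2 + IZR m2) * y) with (u + v) by (unfold u, v; ring).
  replace ((IZR k1 - IZR m1) * x + (IZR k2 - IZR m2) * y) with (u - v) by (unfold u, v; ring).
  rewrite cos_plus, cos_minus, sin_plus, sin_minus. field.
Qed.

Lemma sem_fm_mult t l x y : sem (flat_map (mult t) l) x y = trig_term t x y * sem l x y.
Proof.
  induction l as [|s l IH]. unfold sem; simpl; ring.
  change (flat_map (mult t) (s::l)) with (mult t s ++ flat_map (mult t) l).
  rewrite sem_app, IH, sem_mult, sem_cons. ring.
Qed.

Lemma sem_mul l1 l2 x y : sem (mul l1 l2) x y = sem l1 x y * sem l2 x y.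
Proof.
  induction l1 as [|t l IH]; unfold mul in *. unfold sem; simpl; ring.
  change (flat_map (fun t0 => flat_map (mult t0) l2) (t :: l)) with (flat_map (mult t) l2 ++ flat_map (fun t0 => flat_map (mult t0) l2) l).
  rewrite sem_app, IH, sem_fm_mult, sem_cons. ring.
Qed.

Lemma deriv1_sem l x y : derivable_pt_lim (fun t => sem l t y) x (sem (map d1t l) x y).
Proof.
  induction l as [|s l IH]; simpl map.
  - unfold sem; simpl. apply derivable_pt_lim_const.
  - rewrite sem_cons. apply (derivable_pt_lim_plus (fun t => trig_term s t y) (fun t => sem l t y)); auto.
    destruct s as [[[k1 k2] a] b]; simpl. apply is_derive_Reals.
    auto_derive; auto. ring.
Qed.

Lemma deriv2_sem l x y : derivable_pt_lim (fun t => sem l x t) y (sem (map d2t l) x y).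
Proof.
  induction l as [|s l IH]; simpl map.
  - unfold sem; simpl. apply derivable_pt_lim_const.
  - rewrite sem_cons. apply (derivable_pt_lim_plus (fun t => trig_term s x t) (fun t => sem l x t)); auto.
    destruct s as [[[k1 k2] a] b]; simpl. apply is_derive_Reals.
    auto_derive; auto. ring.
Qed.

Lemma c0_app l1 l2 : c0 (l1 ++ l2) = c0 l1 + c0 l2.
Proof. induction l1; simpl; [ring|rewrite IHl1; ring]. Qed.

Lemma c0_d1 l : c0 (map d1t l) = 0.
Proof.
  induction l as [|[[[k1 k2] a] b] l IH]; simpl; [reflexivity|]. rewrite IH.
  destruct (Z.eq_dec k1 0) as [->|]; [destruct (Z.eq_dec k2 0)|]; simpl; ring.
Qed.

Lemma c0_d2 l : c0 (map d2t l) = 0.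
Proof.
  induction l as [|[[[k1 k2] a] b] l IH]; simpl; [reflexivity|]. rewrite IH.
  destruct (Z.eq_dec k1 0); [destruct (Z.eq_dec k2 0) as [->|]|]; simpl; ring.
Qed.

Definition TP (f : fn2) : Prop := exists l, f = sem l.

Lemma TP_const c : TP (fun _ _ => c).
Proof.
  exists ((0%Z,0%Z,c,0) :: nil). apply functional_extensionality; intro x; apply functional_extensionality; intro y.
  rewrite sem_cons, sem_nil; simpl. replace (0 * x + 0 * y) with 0 by ring. rewrite cos_0, sin_0. ring.
Qed.

Ltac fext := apply functional_extensionality; intro; apply functional_extensionality; intro.

Lemma TP_plus f g : TP f -> TP g -> TP (fun x y => f x y + g x y).
Proof. intros [l1 ->] [l2 ->]. exists (l1 ++ l2). fext. now rewrite sem_app. Qed.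

Lemma TP_minus f g : TP f -> TP g -> TP (fun x y => f x y - g x y).
Proof. intros [l1 ->] [l2 ->]. exists (l1 ++ map (scl (-1)) l2). fext. rewrite sem_app, sem_scl. ring. Qed.

Lemma TP_mult f g : TP f -> TP g -> TP (fun x y => f x y * g x y).
Proof. intros [l1 ->] [l2 ->]. exists (mul l1 l2). fext. now rewrite sem_mul. Qed.

Lemma TP_pow f n : TP f -> TP (fun x y => f x y ^ n).
Proof.
  intro Hf. induction n as [|n IH]; simpl.
  - apply TP_const.
  - apply (TP_mult f (fun x y => f x y ^ n)); auto.
Qed.

Lemma pd1_char f D : (forall x y, derivable_pt_lim (fun t => f t y) x (D x y)) -> pd1 f = D.
Proof.
  intro H. apply functional_extensionality; intro x; apply functional_extensionality; intro y.
  unfold pd1. eapply uniqueness_limite; [|apply H].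
  apply (epsilon_spec (inhabits 0) (fun l => derivable_pt_lim (fun t => f t y) x l)).
  eexists; apply H.
Qed.

Lemma pd2_char f D : (forall x y, derivable_pt_lim (fun t => f x t) y (D x y)) -> pd2 f = D.
Proof.
  intro H. apply functional_extensionality; intro x; apply functional_extensionality; intro y.
  unfold pd2. eapply uniqueness_limite; [|apply H].
  apply (epsilon_spec (inhabits 0) (fun l => derivable_pt_lim (fun t => f x t) y l)).
  eexists; apply H.
Qed.

Lemma pd1_sem l : pd1 (sem l) = sem (map d1t l).
Proof. apply pd1_char. intros; apply deriv1_sem. Qed.
Lemma pd2_sem l : pd2 (sem l) = sem (map d2t l).
Proof. apply pd2_char. intros; apply deriv2_sem. Qed.

Lemma TP_pd1 f : TP f -> TP (pd1 f).
Proof. intros [l ->]. exists (map d1t l). apply pd1_sem. Qed.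
Lemma TP_pd2 f : TP f -> TP (pd2 f).
Proof. intros [l ->]. exists (map d2t l). apply pd2_sem. Qed.

Lemma TP_d1 f x y : TP f -> derivable_pt_lim (fun t => f t y) x (pd1 f x y).
Proof. intros [l ->]. rewrite pd1_sem. apply deriv1_sem. Qed.
Lemma TP_d2 f x y : TP f -> derivable_pt_lim (fun t => f x t) y (pd2 f x y).
Proof. intros [l ->]. rewrite pd2_sem. apply deriv2_sem. Qed.

Lemma pd1_minus f g : TP f -> TP g -> pd1 (fun x y => f x y - g x y) = (fun x y => pd1 f x y - pd1 g x y).
Proof. intros Hf Hg. apply pd1_char. intros. apply derivable_pt_lim_minus; [apply (TP_d1 f)|apply (TP_d1 g)]; auto. Qed.
Lemma pd2_minus f g : TP f -> TP g -> pd2 (fun x y => f x y - g x y) = (fun x y => pd2 f x y - pd2 g x y).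
Proof. intros Hf Hg. apply pd2_char. intros. apply derivable_pt_lim_minus; [apply (TP_d2 f)|apply (TP_d2 g)]; auto. Qed.
Lemma pd1_mult f g : TP f -> TP g -> pd1 (fun x y => f x y * g x y) = (fun x y => pd1 f x y * g x y + f x y * pd1 g x y).
Proof. intros Hf Hg. apply pd1_char. intros. apply (derivable_pt_lim_mult (fun t => f t y) (fun t => g t y)); [apply (TP_d1 f)|apply (TP_d1 g)]; auto. Qed.
Lemma pd2_mult f g : TP f -> TP g -> pd2 (fun x y => f x y * g x y) = (fun x y => pd2 f x y * g x y + f x y * pd2 g x y).
Proof. intros Hf Hg. apply pd2_char. intros. apply (derivable_pt_lim_mult (fun t => f x t) (fun t => g x t)); [apply (TP_d2 f)|apply (TP_d2 g)]; auto. Qed.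

Lemma Int2_TP f : TP f -> exists l, f = sem l /\ Int2 f = 2*PI*(2*PI*c0 l).
Proof. intros [l ->]. exists l; split; auto. apply Int2_sem. Qed.

Lemma Int2_add f g : TP f -> TP g -> Int2 (fun x y => f x y + g x y) = Int2 f + Int2 g.
Proof.
  intros [l1 ->] [l2 ->].
  replace (fun x y => sem l1 x y + sem l2 x y) with (sem (l1 ++ l2)) by (fext; apply sem_app).
  rewrite !Int2_sem, c0_app. ring.
Qed.

Lemma c0_scl c l : c0 (map (scl c) l) = c * c0 l.
Proof.
  induction l as [|[[[k1 k2] a] b] l IH]; simpl; [ring|]. rewrite IH.
  destruct (Z.eq_dec k1 0); [destruct (Z.eq_dec k2 0)|]; simpl; ring.
Qed.

Lemma Int2_scal c f : TP f -> Int2 (fun x y => c * f x y) = c * Int2 f.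
Proof.
  intros [l ->].
  replace (fun x y => c * sem l x y) with (sem (map (scl c) l)) by (fext; apply sem_scl).
  rewrite !Int2_sem, c0_scl. ring.
Qed.

Lemma Int2_ext f g : (forall x y, f x y = g x y) -> Int2 f = Int2 g.
Proof. intro H. f_equal. fext. apply H. Qed.

Lemma Int2_nonneg f : TP f -> (forall x y, 0 <= f x y) -> 0 <= Int2 f.
Proof. intros [l ->] H. rewrite Int2_sem. now apply Int2_sem_nonneg. Qed.

Lemma Int2_pd1 f : TP f -> Int2 (pd1 f) = 0.
Proof. intros [l ->]. rewrite pd1_sem, Int2_sem, c0_d1. ring. Qed.
Lemma Int2_pd2 f : TP f -> Int2 (pd2 f) = 0.
Proof. intros [l ->]. rewrite pd2_sem, Int2_sem, c0_d2. ring. Qed.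

Lemma TP_lap f : TP f -> TP (lap f).
Proof. intro H. unfold lap. apply TP_plus; repeat apply TP_pd1; repeat apply TP_pd2; auto. Qed.
Lemma TP_sub2 f g : TP f -> TP g -> TP (sub2 f g).
Proof. apply TP_minus. Qed.
Lemma TP_gradsq f : TP f -> TP (gradsq f).
Proof. intro H. unfold gradsq. apply TP_plus; apply TP_pow; [apply TP_pd1|apply TP_pd2]; auto. Qed.

Ltac tp := repeat first [ assumption | apply TP_const | apply TP_lap | apply TP_sub2 | apply TP_gradsq
  | apply TP_pd1 | apply TP_pd2 | apply TP_pow | apply TP_plus | apply TP_minus | apply TP_mult ].

Lemma TP_G f : TP f -> TP (G_of_grad f).
Proof. intro H. unfold G_of_grad. apply TP_mult; tp. Qed.
Lemma TP_divg f : TP f -> TP (div_g_grad f).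
Proof. intro H. unfold div_g_grad. tp. Qed.

Lemma IBP1 u v : TP u -> TP v ->
  Int2 (fun x y => pd1 u x y * v x y) = - Int2 (fun x y => u x y * pd1 v x y).
Proof.
  intros Hu Hv. assert (H := Int2_pd1 (fun x y => u x y * v x y) ltac:(tp)).
  rewrite pd1_mult in H by auto. rewrite Int2_add in H by tp. lra.
Qed.
Lemma IBP2 u v : TP u -> TP v ->
  Int2 (fun x y => pd2 u x y * v x y) = - Int2 (fun x y => u x y * pd2 v x y).
Proof.
  intros Hu Hv. assert (H := Int2_pd2 (fun x y => u x y * v x y) ltac:(tp)).
  rewrite pd2_mult in H by auto. rewrite Int2_add in H by tp. lra.
Qed.

Lemma lap_sym W d : TP W -> TP d -> Int2 (fun x y => lap W x y * d x y) = Int2 (fun x y => W x y * lap d x y).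
Proof.
  intros HW Hd. unfold lap.
  rewrite (Int2_ext (fun x y => (pd1 (pd1 W) x y + pd2 (pd2 W) x y) * d x y)
    (fun x y => pd1 (pd1 W) x y * d x y + pd2 (pd2 W) x y * d x y)) by (intros; ring).
  rewrite (Int2_ext (fun x y => W x y * (pd1 (pd1 d) x y + pd2 (pd2 d) x y))
    (fun x y => W x y * pd1 (pd1 d) x y + W x y * pd2 (pd2 d) x y)) by (intros; ring).
  rewrite !Int2_add by tp.
  rewrite (IBP1 (pd1 W) d), (IBP2 (pd2 W) d) by tp.
  rewrite (IBP1 W (pd1 d)), (IBP2 W (pd2 d)) by tp. ring.
Qed.

Lemma lap_self d : TP d -> Int2 (fun x y => lap d x y * d x y) = - Int2 (gradsq d).
Proof.
  intros Hd. unfold lap.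
  rewrite (Int2_ext (fun x y => (pd1 (pd1 d) x y + pd2 (pd2 d) x y) * d x y)
    (fun x y => pd1 (pd1 d) x y * d x y + pd2 (pd2 d) x y * d x y)) by (intros; ring).
  rewrite Int2_add by tp.
  rewrite (IBP1 (pd1 d) d), (IBP2 (pd2 d) d) by tp.
  unfold gradsq. rewrite Int2_add by tp.
  rewrite (Int2_ext (fun x y => pd1 d x y ^ 2) (fun x y => pd1 d x y * pd1 d x y)) by (intros; ring).
  rewrite (Int2_ext (fun x y => pd2 d x y ^ 2) (fun x y => pd2 d x y * pd2 d x y)) by (intros; ring).
  ring.
Qed.

Lemma divg_ibp f d : TP f -> TP d ->
  Int2 (fun x y => div_g_grad f x y * d x y) =
  - Int2 (fun x y => (gradsq f x y - 1) * (pd1 f x y * pd1 d x y + pd2 f x y * pd2 d x y)).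
Proof.
  intros Hf Hd. unfold div_g_grad.
  set (w1 := fun a b => (gradsq f a b - 1) * pd1 f a b).
  set (w2 := fun a b => (gradsq f a b - 1) * pd2 f a b).
  assert (H1 : TP w1) by (unfold w1; tp). assert (H2 : TP w2) by (unfold w2; tp).
  rewrite (Int2_ext (fun x y => (pd1 w1 x y + pd2 w2 x y) * d x y)
    (fun x y => pd1 w1 x y * d x y + pd2 w2 x y * d x y)) by (intros; ring).
  rewrite Int2_add by tp.
  rewrite (IBP1 w1 d), (IBP2 w2 d) by tp.
  rewrite (Int2_ext (fun x y => (gradsq f x y - 1) * (pd1 f x y * pd1 d x y + pd2 f x y * pd2 d x y))
    (fun x y => w1 x y * pd1 d x y + w2 x y * pd2 d x y)) by (intros; unfold w1, w2; ring).
  rewrite Int2_add by tp. ring.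
Qed.

Lemma Int2_minus f g : TP f -> TP g -> Int2 (fun x y => f x y - g x y) = Int2 f - Int2 g.
Proof.
  intros Hf Hg.
  rewrite (Int2_ext _ (fun x y => f x y + (-1) * g x y)) by (intros; ring).
  rewrite Int2_add by tp. rewrite Int2_scal by auto. ring.
Qed.

Lemma in_XN_TP N f : in_XN N f -> TP f.
Proof. intros [l [_ H]]. exists l. fext. apply H. Qed.

Lemma in_XN_sub N f g : in_XN N f -> in_XN N g -> in_XN N (sub2 f g).
Proof.
  intros [l1 [F1 H1]] [l2 [F2 H2]]. exists (l1 ++ map (scl (-1)) l2). split.
  - apply List.Forall_app; split; auto. apply List.Forall_map.
    eapply List.Forall_impl; [|exact F2]. intros [[[k1 k2] a] b]; simpl; auto.
  - intros x y. unfold sub2. rewrite H1, H2.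
    change (fold_right (fun t acc => trig_term t x y + acc) 0 (l1 ++ map (scl (-1)) l2)) with (sem (l1 ++ map (scl (-1)) l2) x y).
    rewrite sem_app, sem_scl. unfold sem. ring.
Qed.

Definition small (N : nat) (t : term) : bool := let '(k1,k2,_,_) := t in
  Z.leb (k1*k1+k2*k2) (Z.of_nat N * Z.of_nat N).

Lemma sem_split (p : term -> bool) l x y :
  sem l x y = sem (filter p l) x y + sem (filter (fun t => negb (p t)) l) x y.
Proof.
  induction l as [|t l IH]; [unfold sem; simpl; ring|].
  cbn [filter]. destruct (p t); cbn [negb]; rewrite !sem_cons, IH; ring.
Qed.

Lemma c0_fm (g : term -> list term) l : (forall t, In t l -> c0 (g t) = 0) -> c0 (flat_map g l) = 0.
Proof.
  induction l as [|t l IH]; simpl; intros H; [reflexivity|].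
  rewrite c0_app, H, IH; auto. ring.
Qed.

Lemma c0_mul_orth N l1 l2 :
  (forall t, In t l1 -> small N t = false) ->
  List.Forall (fun t => let '(k1, k2, _, _) := t in (k1 * k1 + k2 * k2 <= Z.of_nat N * Z.of_nat N)%Z) l2 ->
  c0 (mul l1 l2) = 0.
Proof.
  intros H1 H2. unfold mul. apply c0_fm. intros t Ht. apply c0_fm. intros s Hs.
  specialize (H1 t Ht). rewrite List.Forall_forall in H2. specialize (H2 s Hs).
  destruct t as [[[k1 k2] a] b]; destruct s as [[[m1 m2] c] d]. simpl in H1, H2 |- *.
  apply Z.leb_gt in H1.
  destruct (Z.eq_dec (k1+m1) 0); [destruct (Z.eq_dec (k2+m2) 0)|];
  (destruct (Z.eq_dec (k1-m1) 0); [destruct (Z.eq_dec (k2-m2) 0)|]);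
  try (exfalso; nia); ring.
Qed.

Lemma PiN_spec N F : TP F ->
  in_XN N (PiN N F) /\
  forall q, in_XN N q -> Int2 (fun x y => (F x y - PiN N F x y) * q x y) = 0.
Proof.
  intros [lF ->]. unfold PiN.
  apply (epsilon_spec (inhabits (fun _ _ => 0))
    (fun p => in_XN N p /\ forall q, in_XN N q -> Int2 (fun x y => (sem lF x y - p x y) * q x y) = 0)).
  exists (sem (filter (small N) lF)). split.
  - exists (filter (small N) lF). split; [|reflexivity].
    apply List.Forall_forall. intros [[[k1 k2] a] b] Ht. apply filter_In in Ht as [_ Ht].
    simpl in Ht. apply Z.leb_le in Ht. exact Ht.
  - intros q [lq [Fq Hq]].
    rewrite (Int2_ext _ (sem (mul (filter (fun t => negb (small N t)) lF) lq))).
    + rewrite Int2_sem. erewrite c0_mul_orth; [ring| |exact Fq].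
      intros t Ht. apply filter_In in Ht as [_ Ht]. destruct (small N t); auto.
    + intros x y. rewrite sem_mul, Hq. rewrite (sem_split (small N) lF x y). unfold sem; ring.
Qed.

Lemma sem_bound l : exists B, forall x y, Rabs (sem l x y) <= B.
Proof.
  induction l as [|[[[k1 k2] a] b] l [B HB]].
  - exists 0; intros; unfold sem; simpl; rewrite Rabs_R0; lra.
  - exists (Rabs a + Rabs b + B). intros x y. rewrite sem_cons. simpl.
    eapply Rle_trans; [apply Rabs_triang|]. apply Rplus_le_compat; [|apply HB].
    eapply Rle_trans; [apply Rabs_triang|]. rewrite !Rabs_mult.
    pose proof (Rabs_pos a); pose proof (Rabs_pos b).
    pose proof (COS_bound (IZR k1 * x + IZR k2 * y)); pose proof (SIN_bound (IZR k1 * x + IZR k2 * y)).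
    assert (Rabs (cos (IZR k1 * x + IZR k2 * y)) <= 1) by (apply Rabs_le; lra).
    assert (Rabs (sin (IZR k1 * x + IZR k2 * y)) <= 1) by (apply Rabs_le; lra).
    nra.
Qed.

Lemma Linf_bound f : TP f -> forall x y, gradsq f x y <= (grad_Linf f)^2.
Proof.
  intros Hf x y. unfold grad_Linf.
  destruct (TP_pd1 f Hf) as [l1 E1]. destruct (TP_pd2 f Hf) as [l2 E2].
  destruct (sem_bound l1) as [B1 HB1]. destruct (sem_bound l2) as [B2 HB2].
  set (E := fun r => exists x y, r = sqrt (gradsq f x y)).
  assert (Hb : bound E).
  { exists (B1 + B2). intros r [a [b ->]]. unfold gradsq.
    specialize (HB1 a b); specialize (HB2 a b). rewrite <- E1 in HB1. rewrite <- E2 in HB2.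
    pose proof (Rabs_pos (pd1 f a b)); pose proof (Rabs_pos (pd2 f a b)).
    rewrite <- (sqrt_square (B1 + B2)) by lra. apply sqrt_le_1_alt.
    assert (pd1 f a b ^ 2 = Rabs (pd1 f a b) * Rabs (pd1 f a b)) by (rewrite <- Rabs_mult, Rabs_right; [ring|nra]).
    assert (pd2 f a b ^ 2 = Rabs (pd2 f a b) * Rabs (pd2 f a b)) by (rewrite <- Rabs_mult, Rabs_right; [ring|nra]).
    nra. }
  assert (Hne : exists r, E r) by (exists (sqrt (gradsq f x y)), x, y; reflexivity).
  destruct (completeness E Hb Hne) as [M HM].
  unfold grad_Linf.
  assert (HL := epsilon_spec (inhabits 0) (fun M => is_lub E M) (ex_intro _ M HM)).
  cbv beta in HL.
  set (L := epsilon (inhabits 0) (fun M => is_lub E M)) in *.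
  assert (H1 : sqrt (gradsq f x y) <= L) by (apply (proj1 HL); exists x, y; reflexivity).
  assert (H0 : 0 <= gradsq f x y) by (unfold gradsq; nra).
  pose proof (sqrt_sqrt _ H0). pose proof (sqrt_pos (gradsq f x y)).
  assert (sqrt (gradsq f x y) * sqrt (gradsq f x y) <= L * L) by (apply Rmult_le_compat; lra).
  replace (L^2) with (L*L) by ring. lra.
Qed.

Lemma G_ineq p1 p2 q1 q2 M : p1^2+p2^2 <= M -> q1^2+q2^2 <= M ->
  / 4 * (q1^2+q2^2 - 1)^2 <= / 4 * (p1^2+p2^2 - 1)^2
    + (p1^2+p2^2 - 1) * (p1 * (q1-p1) + p2 * (q2-p2))
    + (3/2*M - 1/2) * ((q1-p1)^2 + (q2-p2)^2).
Proof.
  intros Hs Ht.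
  set (s := p1^2+p2^2) in *. set (t := q1^2+q2^2) in *.
  set (q := (q1-p1)^2 + (q2-p2)^2). set (W := (q1+p1)^2 + (q2+p2)^2).
  assert (Hid : / 4 * (t - 1)^2 - / 4 * (s - 1)^2 - (s - 1) * (p1 * (q1-p1) + p2 * (q2-p2))
     = (s-1)*q/2 + (t-s)^2/4) by (unfold s, t, q; field).
  assert (HCS : (t-s)^2 <= q * W).
  { unfold s, t, q, W.
    assert (E : (q1 ^ 2 + q2 ^ 2 - (p1 ^ 2 + p2 ^ 2)) = (q1-p1)*(q1+p1) + (q2-p2)*(q2+p2)) by ring.
    rewrite E. 
    assert (0 <= ((q1-p1)*(q2+p2) - (q2-p2)*(q1+p1))^2) by apply pow2_ge_0.
    assert (((q1 - p1) ^ 2 + (q2 - p2) ^ 2) * ((q1 + p1) ^ 2 + (q2 + p2) ^ 2) - ((q1 - p1) * (q1 + p1) + (q2 - p2) * (q2 + p2)) ^ 2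
      = ((q1-p1)*(q2+p2) - (q2-p2)*(q1+p1))^2) by ring. lra. }
  assert (Hq : 0 <= q) by (unfold q; pose proof (pow2_ge_0 (q1-p1)); pose proof (pow2_ge_0 (q2-p2)); lra).
  assert (HW' : W = 2 * (s + t) - q) by (unfold W, s, t, q; ring).
  assert (HW : W <= 4 * M) by lra.
  assert (H1 : q * W <= q * (4*M)) by (apply Rmult_le_compat_l; auto).
  assert (H2 : s * q <= M * q) by (apply Rmult_le_compat_r; auto).
  lra.
Qed.

Lemma amgm nu tau a D : 0 < nu -> 0 < tau ->
  sqrt (2 * nu / tau) * (- (D * a)) <= / tau * (a * a) + nu / 2 * (D * D).
Proof.
  intros Hn Ht.
  set (al := sqrt (/ tau)). set (be := sqrt (nu / 2)).
  assert (Ha : al * al = / tau) by (apply sqrt_sqrt; left; apply Rinv_0_lt_compat; auto).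
  assert (Hb : be * be = nu / 2) by (apply sqrt_sqrt; lra).
  assert (Ha0 : 0 <= al) by apply sqrt_pos. assert (Hb0 : 0 <= be) by apply sqrt_pos.
  assert (Hr : sqrt (2 * nu / tau) = 2 * al * be).
  { rewrite <- (sqrt_square (2 * al * be)) by nra. f_equal.
    replace (2 * al * be * (2 * al * be)) with (4 * (al * al) * (be * be)) by ring.
    rewrite Ha, Hb. field. lra. }
  rewrite Hr, <- Ha, <- Hb.
  assert (0 <= (al * a + be * D)^2) by apply pow2_ge_0. nra.
Qed.

Lemma pd1_sub2 f g x y : TP f -> TP g -> pd1 (sub2 f g) x y = pd1 f x y - pd1 g x y.
Proof. intros. unfold sub2. now rewrite pd1_minus. Qed.
Lemma pd2_sub2 f g x y : TP f -> TP g -> pd2 (sub2 f g) x y = pd2 f x y - pd2 g x y.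
Proof. intros. unfold sub2. now rewrite pd2_minus. Qed.
Lemma lap_sub2 f g x y : TP f -> TP g -> lap (sub2 f g) x y = lap f x y - lap g x y.
Proof.
  intros. unfold lap, sub2. rewrite (pd1_minus f g), (pd2_minus f g) by auto.
  rewrite (pd1_minus (pd1 f) (pd1 g)), (pd2_minus (pd2 f) (pd2 g)) by tp. ring.
Qed.

Theorem lemma2p4 (nu tau A : R) (N : nat) (h0 : fn2) (h : nat -> fn2) :
  0 < nu -> 0 < tau -> 0 < A -> (2 <= N)%nat ->
  periodic2 h0 -> cont2 h0 -> Int2 h0 = 0 ->
  h 0%nat = PiN N h0 ->
  (forall n, in_XN N (h n)) ->
  (forall n x y,
     (h (S n) x y - h n x y) / tau =
       - nu * lap (lap (h (S n))) x y
       + A * lap (sub2 (h (S n)) (h n)) x y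
       + PiN N (div_g_grad (h n)) x y) ->
  forall n,
    energy nu (h (S n)) - energy nu (h n)
    + (A + 1 / 2 + sqrt (2 * nu / tau)) * grad_L2sq (sub2 (h (S n)) (h n))
    <= grad_L2sq (sub2 (h (S n)) (h n)) * (3 / 2)
       * Rmax ((grad_Linf (h n))^2) ((grad_Linf (h (S n)))^2).
Proof.
  intros Hnu Htau HA HN _ _ _ _ HX Hs n.
  pose proof (Hs n) as Hsn. clear Hs.
  assert (HuX := HX n). assert (HvX := HX (S n)).
  set (u := h n) in *. set (v := h (S n)) in *.
  assert (Hu : TP u) by (eapply in_XN_TP; eauto).
  assert (Hv : TP v) by (eapply in_XN_TP; eauto).
  set (d := sub2 v u) in *.
  assert (Hd : TP d) by (unfold d; tp).
  assert (HdX : in_XN N d) by (apply in_XN_sub; auto).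
  set (F := div_g_grad u) in *.
  assert (HF : TP F) by (apply TP_divg; auto).
  set (P := PiN N F) in *.
  destruct (PiN_spec N F HF) as [HPX HPo]. fold P in HPX, HPo.
  assert (HP : TP P) by (eapply in_XN_TP; eauto).
  assert (Hproj := HPo d HdX).
  set (M := Rmax (grad_Linf u ^ 2) (grad_Linf v ^ 2)).
  set (r := sqrt (2 * nu / tau)).
  set (S := Int2 (fun x y => d x y * d x y)).
  set (Q := Int2 (fun x y => lap d x y * lap d x y)).
  set (L := grad_L2sq d).
  set (X := Int2 (fun x y => lap v x y * lap d x y)).
  set (Gt := Int2 (fun x y => (gradsq u x y - 1) * (pd1 u x y * pd1 d x y + pd2 u x y * pd2 d x y))).
  assert (HL : Int2 (fun x y => lap d x y * d x y) = - L) by (apply lap_self; auto).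
  assert (f1 : Int2 (fun x y => P x y * d x y) = - Gt).
  { rewrite (Int2_ext _ (fun x y => F x y * d x y - P x y * d x y)) in Hproj by (intros; ring).
    rewrite Int2_minus in Hproj by tp.
    unfold F in Hproj. rewrite divg_ibp in Hproj by auto. fold Gt in Hproj. lra. }
  assert (f2 : Int2 (fun x y => P x y * d x y) = / tau * S + nu * X + A * L).
  { rewrite (Int2_ext _ (fun x y => / tau * (d x y * d x y) +
        (nu * (lap (lap v) x y * d x y) + (- A) * (lap d x y * d x y)))).
    2:{ intros x y. assert (E := Hsn x y).
        assert (Ed : d x y = v x y - u x y) by reflexivity.
        assert (EP : P x y = d x y / tau + nu * lap (lap v) x y - A * lap d x y) by (rewrite Ed; lra).
        rewrite EP. field. lra. }
    rewrite !Int2_add by tp. rewrite !Int2_scal by tp.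
    rewrite HL. rewrite (lap_sym (lap v) d) by tp. fold S X. ring. }
  assert (f3 : Int2 (fun x y => lap u x y ^ 2) = Int2 (fun x y => lap v x y ^ 2) + (-2) * X + Q).
  { rewrite (Int2_ext (fun x y => lap u x y ^ 2) (fun x y => lap v x y ^ 2 +
        ((-2) * (lap v x y * lap d x y) + lap d x y * lap d x y))).
    2:{ intros x y. unfold d. rewrite lap_sub2 by auto. ring. }
    rewrite !Int2_add by tp. rewrite Int2_scal by tp. fold X Q. ring. }
  assert (f4 : Int2 (G_of_grad v) <= Int2 (G_of_grad u) + Gt + (3/2*M - 1/2) * L).
  { assert (H := Int2_nonneg (fun x y => (G_of_grad u x y + ((gradsq u x y - 1) * (pd1 u x y * pd1 d x y + pd2 u x y * pd2 d x y)
         + (3/2*M - 1/2) * gradsq d x y)) - G_of_grad v x y)).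
    rewrite Int2_minus, !Int2_add, Int2_scal in H by (try apply TP_G; tp).
    fold Gt in H. unfold L, grad_L2sq. cut (0 <= Int2 (G_of_grad u) + (Gt + (3 / 2 * M - 1 / 2) * Int2 (gradsq d)) -
  Int2 (G_of_grad v)); [lra|].
    apply H; [apply TP_minus; [apply TP_plus; [apply TP_G; auto|] | apply TP_G; auto]; tp|].
    intros x y. apply Rge_le, Rge_minus, Rle_ge.
    unfold G_of_grad, gradsq. unfold d. rewrite !pd1_sub2, !pd2_sub2 by auto.
    assert (B1 : pd1 u x y ^ 2 + pd2 u x y ^ 2 <= M).
    { apply Rle_trans with (grad_Linf u ^ 2); [apply (Linf_bound u Hu)|apply Rmax_l]. }
    assert (B2 : pd1 v x y ^ 2 + pd2 v x y ^ 2 <= M).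
    { apply Rle_trans with (grad_Linf v ^ 2); [apply (Linf_bound v Hv)|apply Rmax_r]. }
    pose proof (G_ineq _ _ _ _ M B1 B2). lra. }
  assert (f5 : 0 <= / tau * S + nu / 2 * Q + r * (- L)).
  { rewrite <- HL. unfold S, Q.
    rewrite <- !Int2_scal by tp. rewrite <- !Int2_add by tp.
    apply Int2_nonneg; [tp|]. intros x y. pose proof (amgm nu tau (d x y) (lap d x y) Hnu Htau).
    fold r in H. lra. }
  unfold energy. fold L.
  rewrite f3.
  assert (HnX : nu * X = - Gt - / tau * S - A * L) by lra.
  nra.
Qed.
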